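(* Let $X$ and $Y$ be two arbitrary nonnegative random variables and assume that $\mathbb{P}(Y\le\delta)=0$ for some $\delta>0$. Then, for any $y$ that satisfies $\mathbb{P}(Y<y)>0$, $$\mathbb{P}(Y<y)\cdot\mathbb{E}\left[\frac XY\;\middle|\;Y<y\right]\le\frac1{\delta^2}\cdot\mathbb{P}(Y<y)+\int_{1/\delta^2}^\infty\mathbb{P}(X\ge\sqrt x)\,\mathrm{d}x.$$ *)

(* Defs.v *)
From HB Require Import structures.
From mathcomp Require Import all_boot all_order all_algebra.
From mathcomp Require Import all_classical all_reals all_analysis.
Set Implicit Arguments. Unset Strict Implicit. Unset Printing Implicit Defensive.
Import Order.TTheory GRing.Theory Num.Theory.
Local Open Scope classical_set_scope.
Local Open Scope ring_scope.
Local Open Scope ereal_scope.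

Definition cond_expectation_event d (T : measurableType d) (R : realType)
  (P : probability T R) (A : set T) (f : T -> R) : \bar R :=
  (\int[P]_(w in A) (f w)%:E) * ((fine (P A))^-1)%:E.

(* Main.v *)
Require Import Defs.
From HB Require Import structures.
From mathcomp Require Import all_boot all_order all_algebra.
From mathcomp Require Import all_classical all_reals all_analysis.
Import Order.TTheory GRing.Theory Num.Theory.
Import measurable_realfun.
From mathcomp Require Import lra.
Local Open Scope classical_set_scope.
Local Open Scope ring_scope.
Local Open Scope ereal_scope.

Lemma measurable_invR (R : realType) : measurable_fun [set: R] (@GRing.inv R).
Proof.

rewrite -(setUCr [set 0%R]); apply/measurable_funU => //.
  by apply: measurableC.
split.
- have := (@measurable_cst _ _ R R [set 0%R] 0%R). apply: eq_measurable_fun.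
  by move=> x; rewrite inE /= => ->; rewrite invr0.

- apply: measurable_realfun.open_continuous_measurable_fun.
    exact/closed_openC/accessible_closed_set1/hausdorff_accessible/norm_hausdorff.
  move=> x; rewrite inE /= => /eqP x0.
  exact: inv_continuous.
Qed.

Section Z.
Context d (T : measurableType d) (R : realType) (P : probability T R) (X : {RV P >-> R}) (c : R).
Definition Zf (w : T) : R := if (c < X w ^+ 2)%R then (X w ^+ 2)%R else 0%R.
Lemma Zf_meas : measurable_fun setT Zf.
Proof.
apply: measurable_fun_ifT.
- by apply: measurable_realfun.measurable_fun_ltr => //; exact: measurable_realfun.measurable_funX.
- exact: measurable_realfun.measurable_funX.
- exact: measurable_cst.
Qed.
HB.instance Definition _ := isMeasurableFun.Build d _ T R Zf Zf_meas.
Definition ZRV : {RV P >-> R} := Zf.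

Hypothesis c0 : (0 <= c)%R.
Hypothesis hX : forall w, (0 <= X w)%R.
Let B := [set w | (c < X w ^+ 2)%R].
Let mB : measurable B.
Proof.
have := measurable_realfun.measurable_fun_ltr (measurable_cst c) (measurable_realfun.measurable_funX 2 (@measurable_funPT _ _ _ _ X)).
by move=> /(_ measurableT [set true]); rewrite setTI; exact.
Qed.

Lemma ccdfZ_small r : (0 <= r < c)%R -> ccdf ZRV r = P B.
Proof.
move=> /andP[r0 rc]; rewrite /ccdf /distribution /pushforward /=.
congr (P _); apply/seteqP; split => w /=; rewrite /Zf in_itv /= andbT.
- by case: ifP => // _; rewrite ltNge r0.
- by move=> cX; rewrite cX (lt_trans rc).
Qed.

Lemma ccdfZ_big r : (c <= r)%R -> ccdf ZRV r <= P [set w | (Num.sqrt r <= X w)%R].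
Proof.
move=> cr; rewrite /ccdf /distribution /pushforward /=.
apply: le_measure; rewrite ?inE.
- by rewrite -[X in measurable X]setTI; apply: measurable_funPT => //.
- rewrite -[X in measurable X]setTI.
  by apply: (measurable_realfun.measurable_fun_ler (measurable_cst _)) => //.
move=> w /=; rewrite /Zf in_itv /= andbT.
case: ifP => _; last by move=> /lt_le_trans /(_ (le_trans c0 cr)); rewrite ltxx.
move=> rX; rewrite -(ger0_norm (hX w)) -sqrtr_sqr.
by rewrite ler_sqrt ?ltW // (le_lt_trans (le_trans c0 cr) rX).
Qed.


Lemma EZ : 'E_P[ZRV] = (c%:E * P B) + \int[lebesgue_measure]_(r in `[c, +oo[) ccdf ZRV r.
Proof.
have Z0 w : (0 <= ZRV w)%R by rewrite /= /Zf; case: ifP => // _; exact: sqr_ge0.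
rewrite ge0_expectation_ccdf //.
rewrite (@itv_bndbnd_setU _ _ (BLeft 0%R) (BLeft c) (BInfty _ false)) //.
rewrite ge0_integral_setU //=.
- congr (_ + _).
  rewrite (eq_integral (cst (P B))); last first.
    by move=> r; rewrite inE /= in_itv /= => /ccdfZ_small.
  rewrite integral_cst //= lebesgue_measure_itv /= lte_fin.

  have [c_gt0|] := ltP 0%R c; first by rewrite oppr0 adde0 muleC.
  move=> c_le0; have c_eq0 : c = 0%R by apply/eqP; rewrite eq_le c_le0 c0.
  by rewrite c_eq0 mul0e mule0.
- exact: measurable_funS (ccdf_measurable _).
- apply/disj_setPS => r; rewrite /= !in_itv /= => -[] /andP [] _ rc /andP [] cr _.
  by move: (lt_le_trans rc cr); rewrite ltxx.
Qed.

End Z.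

Theorem lemma4 (d : measure_display) (T : measurableType d) (R : realType)
  (P : probability T R) (X Y : {RV P >-> R})
  (hX : forall w, (0 <= X w)%R) (hY : forall w, (0 <= Y w)%R)
  (delta : R) (hdelta : (0 < delta)%R)
  (hYdelta : P [set w | (Y w <= delta)%R] = 0)
  (y : R) (hy : 0 < P [set w | (Y w < y)%R]) :
  P [set w | (Y w < y)%R] *
    cond_expectation_event P [set w | (Y w < y)%R] (fun w => (X w / Y w)%R)
  <= ((delta ^- 2)%:E * P [set w | (Y w < y)%R]
      + \int[lebesgue_measure]_(x in `[(delta ^- 2)%R, +oo[)
          P [set w | (Num.sqrt x <= X w)%R]).
Proof.
set A := [set w | (Y w < y)%R].
set e := (delta^-1)%R.
set c := (e ^+ 2)%R.
have e0 : (0 < e)%R by rewrite invr_gt0.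
have c0 : (0 <= c)%R by rewrite sqr_ge0.
have hc : (delta ^- 2)%R = c by rewrite /c /e exprVn.
rewrite hc.
have mA : measurable A.
  have := measurable_realfun.measurable_fun_ltr (@measurable_funPT _ _ _ _ Y) (measurable_cst y).
  by move=> /(_ measurableT [set true]); rewrite setTI; exact.
have mD : measurable [set w | (Y w <= delta)%R].
  have := measurable_realfun.measurable_fun_ler (@measurable_funPT _ _ _ _ Y) (measurable_cst delta).
  by move=> /(_ measurableT [set true]); rewrite setTI; exact.
have mX : measurable_fun setT X by exact: measurable_funPT.
have mY : measurable_fun setT Y by exact: measurable_funPT.
have -> : P A * cond_expectation_event P A (fun w => (X w / Y w)%R) =
          \int[P]_(w in A) (X w / Y w)%:E.
  rewrite /cond_expectation_event.
  have PAf : P A \is a fin_num by exact: fin_num_measure.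
  have p0 : (0 < fine (P A))%R by rewrite fine_gt0 // hy /= ltey_eq PAf.
  rewrite -{1}(fineK PAf) muleC -muleA -EFinM mulVf ?gt_eqF // mule1 //.
have step2 : \int[P]_(w in A) (X w / Y w)%:E <= \int[P]_(w in A) (X w * e)%:E.
  apply: ae_ge0_le_integral => //.
  - move=> w _; rewrite lee_fin; exact: divr_ge0.
  - apply/measurable_EFinP; apply: measurable_funS (measurable_funM mX _) => //.
    exact: measurableT_comp (measurable_invR R) mY.
  - move=> w _; rewrite lee_fin; apply: mulr_ge0 => //; exact: ltW.
  - apply/measurable_EFinP; apply: measurable_funS (measurable_funM mX _) => //.
  exists [set w | (Y w <= delta)%R]; split => // w /= H.
  rewrite leNgt; apply/negP => dY; apply: H => _.
  rewrite lee_fin ler_wpM2l // /e lef_pV2 ?posrE ?ltW //.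
  exact: lt_trans dY.
set B := [set w | (c < X w ^+ 2)%R].
have mB : measurable B.
  have := measurable_fun_ltr (measurable_cst c) (measurable_funX 2 mX).
  by move=> /(_ measurableT [set true]); rewrite setTI; exact.
set f := fun w => (X w * e)%:E.
have f0 w : 0 <= f w by rewrite lee_fin mulr_ge0 // ltW.
have mf : measurable_fun setT f.
  by apply/measurable_EFinP; apply: measurable_funM.
have mfA : measurable_fun setT (f \_ A).
  by apply/(measurable_restrictT f mA); exact: measurable_funS mf.
have fA0 w : 0 <= (f \_ A) w by rewrite patchE; case: ifP.
have mIB : measurable_fun setT (fun w => (c * \1_B w)%:E).
  by apply/measurable_EFinP; apply: measurable_funM => //; exact: measurable_indic.
have mIA : measurable_fun setT (fun w => (c * \1_A w)%:E).
  by apply/measurable_EFinP; apply: measurable_funM => //; exact: measurable_indic.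
have IB0 w : 0 <= (c * \1_B w)%:E by rewrite lee_fin mulr_ge0 // indicE.
have IA0 w : 0 <= (c * \1_A w)%:E by rewrite lee_fin mulr_ge0 // indicE.
have Z0 w : 0 <= (@Zf _ _ _ P X c w)%:E by rewrite lee_fin /Zf; case: ifP => // _; exact: sqr_ge0.
have mZ : measurable_fun setT (fun w => (@Zf _ _ _ P X c w)%:E) by apply/measurable_EFinP; exact: Zf_meas.
have Ha : \int[P]_w ((f \_ A) w + (c * \1_B w)%:E) <= \int[P]_w ((c * \1_A w)%:E + (@Zf _ _ _ P X c w)%:E).
  apply: ge0_le_integral => //.
  - by move=> w _; rewrite adde_ge0.
  - exact: emeasurable_funD.
  - exact: emeasurable_funD.
  move=> w _; rewrite patchE /f !indicE /Zf.
  have -> : (w \in B) = (c < X w ^+ 2)%R by apply/idP/idP; rewrite inE.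
  have Xw := hX w.
  case: (w \in A); case: ifP => hcX; rewrite /= ?mulr1 ?mulr0 -?EFinD lee_fin.
  - have eX : (e < X w)%R.
      rewrite ltNge; apply/negP => Xe.
      move: hcX; rewrite /c !expr2 ltNge => /negP; apply.
      by rewrite ler_pM // ltW.
    have := ler_wpM2l Xw (ltW eX); rewrite /c !expr2; lra.
  - have Xe : (X w <= e)%R.
      rewrite leNgt; apply/negP => eX.
      move/negbT: hcX; rewrite /c !expr2 -leNgt => H.
      have : (e * e < X w * X w)%R by rewrite ltr_pM // ltW.
      lra.
    have := ler_wpM2r (ltW e0) Xe; rewrite /c !expr2; lra.
  - by rewrite !add0r ltW.
  - by rewrite !addr0.
have mIB' : measurable_fun setT (fun w => (\1_B w : R)%:E).
  by apply/measurable_EFinP; exact: measurable_indic.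
have mIA' : measurable_fun setT (fun w => (\1_A w : R)%:E).
  by apply/measurable_EFinP; exact: measurable_indic.
have E1 : \int[P]_x (c * \1_B x)%:E = c%:E * P B.
  under eq_integral do rewrite EFinM.
  by rewrite ge0_integralZl_EFin // integral_indic // setIT.
have E2 : \int[P]_x (c * \1_A x)%:E = c%:E * P A.
  under eq_integral do rewrite EFinM.
  by rewrite ge0_integralZl_EFin // integral_indic // setIT.
move: Ha; rewrite ge0_integralD // ge0_integralD // -integral_mkcond E1 E2.
rewrite -(@expectation_def _ _ _ P (@ZRV _ _ _ P X c)) (@EZ _ _ _ P X c c0) => Ha.
have mS r : measurable [set w | (Num.sqrt r <= X w)%R].
  have := measurable_fun_ler (measurable_cst (Num.sqrt r)) mX.
  by move=> /(_ measurableT [set true]); rewrite setTI; exact.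
have He : \int[lebesgue_measure]_(r in `[c, +oo[) ccdf (@ZRV _ _ _ P X c) r <=
    \int[lebesgue_measure]_(x in `[c, +oo[) P [set w | (Num.sqrt x <= X w)%R].
  apply: ge0_le_integral => //.
  - exact: measurable_funS (ccdf_measurable _).
  - have -> : (fun r => P [set w | (Num.sqrt r <= X w)%R]) =
        EFin \o (fun r => fine (P [set w | (Num.sqrt r <= X w)%R])).
      by apply/funext => r /=; rewrite fineK // fin_num_measure.
    apply/measurable_EFinP; apply: nonincreasing_measurable => // r s rs.
    rewrite fine_le ?fin_num_measure //; apply: le_measure; rewrite ?inE //.
    by move=> w /=; apply: le_trans; exact: ler_wsqrtr.
  - by move=> r; rewrite /= in_itv /= andbT => cr; exact: (@ccdfZ_big _ _ _ P X c c0 hX).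
apply: le_trans step2 _.
have PBf : c%:E * P B \is a fin_num by rewrite fin_numM // fin_num_measure.
rewrite -(leeD2rE _ _ PBf); apply: le_trans Ha _.
rewrite -addeA; apply: leeD2l; rewrite [leRHS]addeC; exact: leeD2l.
Qed.
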